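(* Let $\rho$ be the higher-order GSOS law induced by a relatively flat higher-order GSOS law $(\rho^j)_{j\in J}$, and let $z\colon Z\to B(Z,Z)$ be a locally final coalgebra. Let $a_\rho\colon\Sigma Z\to Z$ be the algebra structure constructed in the context. Then the $\Sigma$-algebra $(Z,a_\rho)$ is adequate: with $\llbracket-\rrbracket\colon\mu\Sigma\to Z$ the unique $\Sigma$-algebra morphism and $\mathsf{beh}\colon\mu\Sigma\to\nu B(\mu\Sigma,-)$ the unique $B(\mu\Sigma,-)$-coalgebra morphism from $(\mu\Sigma,\gamma)$, there is a morphism $k\colon Z\to\nu B(\mu\Sigma,-)$ with $k\cdot\llbracket-\rrbracket=\mathsf{beh}$.
   Context: Let $\mathcal{C}$ be a category with binary products and coproducts (pairing $\langle f,g\rangle$, copairing $[f,g]$, injections $\mathsf{inl},\mathsf{inr}$, codiagonal $\nabla$). Let $\Sigma\colon\mathcal{C}\to\mathcal{C}$ have an initial algebra $(\mu\Sigma,\iota)$ and free algebras $(\Sigma^\star X,\iota_X)$ with units $\eta_X$; for an algebra $(A,a)$, $\hat a\colon\Sigma^\star A\to A$ is the unique algebra morphism with $\hat a\cdot\eta_A=\mathrm{id}$. Let $B\colon\mathcal{C}^{op}\times\mathcal{C}\to\mathcal{C}$ be a bifunctor such that every $B(X,-)$ has a final coalgebra $\nu B(X,-)$. A higher-order GSOS law is a family $\rho_{X,Y}\colon\Sigma(X\times B(X,Y))\to B(X,\Sigma^\star(X+Y))$ dinatural in $X$, natural in $Y$; its operational model is the unique $\gamma\colon\mu\Sigma\to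 B(\mu\Sigma,\mu\Sigma)$ with $\gamma\cdot\iota=B(\mathrm{id},\hat\iota\cdot\Sigma^\star\nabla)\cdot\rho_{\mu\Sigma,\mu\Sigma}\cdot\Sigma\langle\mathrm{id},\gamma\rangle$. A higher-order coalgebra $z\colon Z\to B(Z,Z)$ is locally final if it is a final coalgebra for $B(Z,-)$. Relative flatness: $(J,<)$ well-founded, $\Sigma=\coprod_{j\in J}\Sigma_j$ with $\Sigma_j$ and $\Sigma_{<j}=\coprod_{i<j}\Sigma_i$ having free algebras; a relatively flat law is a family $\rho^j_{X,Y}\colon\Sigma_j(X\times B(X,Y))\to B(X,\Sigma^\star_{<j}(X+Y)+\Sigma_j\Sigma^\star_{<j}(X+Y))$ dinatural in $X$, natural in $Y$, inducing the law $\rho_{X,Y}=[B(\mathrm{id},e_{j,X+Y})\cdot\rho^j_{X,Y}]_j$ with $e_{j,W}=[\mathsf{inj}^\star_{<j},\iota_W\cdot\mathsf{inj}_j\cdot\Sigma_j\mathsf{inj}^\star_{<j}]$ ($\mathsf{inj}_j,\mathsf{inj}_{<j}$ coproduct injections into $\Sigma$, $\mathsf{inj}^\star_{<j}\colon\Sigma^\star_{<j}\to\Sigma^\star$ induced). Construction of $a_\rho$: by well-founded recursion on $j$ define $a^j_\rho\colon Z+\Sigma_jZ\to Z$: given $a^i_\rho$ for $i<j$, put $a^{<j}_\rho=[a^i_\rho\cdot\mathsf{inr}]_{i<j}\colon\Sigma_{<j}Z\to Z$, and let $a^j_\rho$ be the unique $B(Z,-)$-coalgebra morphism into $(Z,z)$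 from the coalgebra $Z+\Sigma_jZ\to B(Z,Z+\Sigma_jZ)$ given by the composite $\nabla\cdot(B(\mathrm{id},\mathsf{inl})+\mathrm{id})\cdot(\mathrm{id}+B(\mathrm{id},\widehat{a^{<j}_\rho}+\Sigma_j\widehat{a^{<j}_\rho}))\cdot(\mathrm{id}+\rho^j_{Z,Z}\text{ composed with }\Sigma_j(\mathrm{id}\times B(\mathrm{id},\nabla)))\cdot(z+\Sigma_j\langle\mathrm{id},z\rangle)$ (here $\rho^j$ is used at $X=Y=Z$ followed by $\nabla\colon Z+Z\to Z$ inside the free monads). Then $a_\rho=[a^j_\rho\cdot\mathsf{inr}]_{j\in J}\colon\Sigma Z\to Z$; $(Z,a_\rho,z)$ is a $\rho$-bialgebra. *)

(* Defs.v *)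
From Stdlib Require Import Relations Wellfounded.

Record Category := {
  ob :> Type;
  hom : ob -> ob -> Type;
  idm : forall A, hom A A;
  comp : forall A B D, hom B D -> hom A B -> hom A D;
  comp_idl : forall A B (f : hom A B), comp A B B (idm B) f = f;
  comp_idr : forall A B (f : hom A B), comp A A B f (idm A) = f;
  comp_assoc : forall A B D E (h : hom D E) (g : hom B D) (f : hom A B),
      comp A D E h (comp A B D g f) = comp A B E (comp B D E h g) f }.
Arguments hom {c} _ _.
Arguments idm {c} A.
Arguments comp {c A B D} _ _.
Notation "g ∘ f" := (comp g f) (at level 40, left associativity).

Record BinProducts (C : Category) := {
  bprod : C -> C -> C;
  pi1 : forall A B, hom (bprod A B) A;
  pi2 : forall A B, hom (bprod A B) B;
  pairing : forall X A B, hom X A -> hom X B -> hom X (bprod A B);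
  pairing_pi1 : forall X A B (f : hom X A) (g : hom X B), pi1 A B ∘ pairing X A B f g = f;
  pairing_pi2 : forall X A B (f : hom X A) (g : hom X B), pi2 A B ∘ pairing X A B f g = g;
  pairing_unique : forall X A B (f : hom X A) (g : hom X B) (h : hom X (bprod A B)),
      pi1 A B ∘ h = f -> pi2 A B ∘ h = g -> h = pairing X A B f g }.
Arguments bprod {C} _ _ _.
Arguments pi1 {C} _ {A B}.
Arguments pi2 {C} _ {A B}.
Arguments pairing {C} _ {X A B} _ _.

Record BinCoproducts (C : Category) := {
  bcoprod : C -> C -> C;
  cinl : forall A B, hom A (bcoprod A B);
  cinr : forall A B, hom B (bcoprod A B);
  copair : forall A B X, hom A X -> hom B X -> hom (bcoprod A B) X;
  copair_inl : forall A B X (f : hom A X) (g : hom B X), copair A B X f g ∘ cinl A B = f;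
  copair_inr : forall A B X (f : hom A X) (g : hom B X), copair A B X f g ∘ cinr A B = g;
  copair_unique : forall A B X (f : hom A X) (g : hom B X) (h : hom (bcoprod A B) X),
      h ∘ cinl A B = f -> h ∘ cinr A B = g -> h = copair A B X f g }.
Arguments bcoprod {C} _ _ _.
Arguments cinl {C} _ {A B}.
Arguments cinr {C} _ {A B}.
Arguments copair {C} _ {A B X} _ _.

Definition prodmap {C : Category} (P : BinProducts C) {A A' B B'}
  (f : hom A A') (g : hom B B') : hom (bprod P A B) (bprod P A' B') :=
  pairing P (f ∘ pi1 P) (g ∘ pi2 P).
Definition summap {C : Category} (Q : BinCoproducts C) {A A' B B'}
  (f : hom A A') (g : hom B B') : hom (bcoprod Q A B) (bcoprod Q A' B') :=
  copair Q (cinl Q ∘ f) (cinr Q ∘ g).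
Definition codiag {C : Category} (Q : BinCoproducts C) (A : C) : hom (bcoprod Q A A) A :=
  copair Q (idm A) (idm A).

Definition IsCoproduct {C : Category} {I : Type} (F : I -> C) (S : C)
  (inj : forall i, hom (F i) S) : Prop :=
  forall X (f : forall i, hom (F i) X),
    exists h : hom S X, (forall i, h ∘ inj i = f i) /\
      (forall h' : hom S X, (forall i, h' ∘ inj i = f i) -> h' = h).

Record Functor (C : Category) := {
  fob : C -> C;
  fmap : forall A B, hom A B -> hom (fob A) (fob B);
  fmap_id : forall A, fmap A A (idm A) = idm (fob A);
  fmap_comp : forall A B D (g : hom B D) (f : hom A B),
      fmap A D (g ∘ f) = fmap B D g ∘ fmap A B f }.
Arguments fob {C} _ _.
Arguments fmap {C} _ {A B} _.

Definition IsNatural {C : Category} (F G : Functor C) (t : forall X, hom (fob F X) (fob G X)) : Prop :=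
  forall X Y (f : hom X Y), fmap G f ∘ t X = t Y ∘ fmap F f.

Definition IsFunctorCoproduct {C : Category} {I : Type} (Fs : I -> Functor C) (S : Functor C)
  (inj : forall i X, hom (fob (Fs i) X) (fob S X)) : Prop :=
  (forall i, IsNatural (Fs i) S (inj i)) /\
  (forall X, IsCoproduct (fun i => fob (Fs i) X) (fob S X) (fun i => inj i X)).

Record Bifunctor (C : Category) := {
  bob : C -> C -> C;
  bmap : forall X X' Y Y', hom X' X -> hom Y Y' -> hom (bob X Y) (bob X' Y');
  bmap_id : forall X Y, bmap X X Y Y (idm X) (idm Y) = idm (bob X Y);
  bmap_comp : forall X X' X'' Y Y' Y'' (f : hom X' X) (f' : hom X'' X')
      (g : hom Y Y') (g' : hom Y' Y''),
      bmap X X'' Y Y'' (f ∘ f') (g' ∘ g) = bmap X' X'' Y' Y'' f' g' ∘ bmap X X' Y Y' f g }.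
Arguments bob {C} _ _ _.
Arguments bmap {C} _ {X X' Y Y'} _ _.

Definition IsAlgMor {C : Category} (F : Functor C) {A A' : C}
  (a : hom (fob F A) A) (a' : hom (fob F A') A') (h : hom A A') : Prop :=
  h ∘ a = a' ∘ fmap F h.

Definition IsCoalgMor {C : Category} (B : Bifunctor C) (X : C) {Y Y' : C}
  (c : hom Y (bob B X Y)) (c' : hom Y' (bob B X Y')) (h : hom Y Y') : Prop :=
  c' ∘ h = bmap B (idm X) h ∘ c.

Record FreeAlgebras {C : Category} (F : Functor C) := {
  fa_obj : C -> C;
  fa_str : forall X, hom (fob F (fa_obj X)) (fa_obj X);
  fa_eta : forall X, hom X (fa_obj X);
  fa_ext : forall X A, hom (fob F A) A -> hom X A -> hom (fa_obj X) A;
  fa_ext_mor : forall X A (a : hom (fob F A) A) (f : hom X A),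
      IsAlgMor F (fa_str X) a (fa_ext X A a f);
  fa_ext_eta : forall X A (a : hom (fob F A) A) (f : hom X A),
      fa_ext X A a f ∘ fa_eta X = f;
  fa_ext_unique : forall X A (a : hom (fob F A) A) (f : hom X A) (h : hom (fa_obj X) A),
      IsAlgMor F (fa_str X) a h -> h ∘ fa_eta X = f -> h = fa_ext X A a f }.
Arguments fa_obj {C F} _ _.
Arguments fa_str {C F} _ _.
Arguments fa_eta {C F} _ _.
Arguments fa_ext {C F} _ {X A} _ _.

Definition fstar {C : Category} {F : Functor C} (FA : FreeAlgebras F) {X Y : C}
  (f : hom X Y) : hom (fa_obj FA X) (fa_obj FA Y) :=
  fa_ext FA (fa_str FA Y) (fa_eta FA Y ∘ f).
Definition hat {C : Category} {F : Functor C} (FA : FreeAlgebras F) {A : C}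
  (a : hom (fob F A) A) : hom (fa_obj FA A) A :=
  fa_ext FA a (idm A).

Record InitialAlgebra {C : Category} (F : Functor C) := {
  ia_obj : C;
  ia_str : hom (fob F ia_obj) ia_obj;
  ia_fold : forall A, hom (fob F A) A -> hom ia_obj A;
  ia_fold_mor : forall A (a : hom (fob F A) A), IsAlgMor F ia_str a (ia_fold A a);
  ia_fold_unique : forall A (a : hom (fob F A) A) (h : hom ia_obj A),
      IsAlgMor F ia_str a h -> h = ia_fold A a }.
Arguments ia_obj {C F} _.
Arguments ia_str {C F} _.
Arguments ia_fold {C F} _ {A} _.

Record FinalCoalgebra {C : Category} (B : Bifunctor C) (X : C) := {
  fc_obj : C;
  fc_str : hom fc_obj (bob B X fc_obj);
  fc_unfold : forall Y, hom Y (bob B X Y) -> hom Y fc_obj;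
  fc_unfold_mor : forall Y (c : hom Y (bob B X Y)), IsCoalgMor B X c fc_str (fc_unfold Y c);
  fc_unfold_unique : forall Y (c : hom Y (bob B X Y)) (h : hom Y fc_obj),
      IsCoalgMor B X c fc_str h -> h = fc_unfold Y c }.
Arguments fc_obj {C B X} _.
Arguments fc_str {C B X} _.
Arguments fc_unfold {C B X} _ {Y} _.

Definition IsLocallyFinal {C : Category} (B : Bifunctor C) {Z : C} (z : hom Z (bob B Z Z)) : Prop :=
  forall Y (c : hom Y (bob B Z Y)),
    exists h : hom Y Z, IsCoalgMor B Z c z h /\
      (forall h' : hom Y Z, IsCoalgMor B Z c z h' -> h' = h).

Section RelFlat.
Context {C : Category} (P : BinProducts C) (Q : BinCoproducts C) (B : Bifunctor C)
  {J : Type} (lt : J -> J -> Prop)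
  (Sig : J -> Functor C) (Sigma : Functor C) (Siglt : J -> Functor C)
  (FS : FreeAlgebras Sigma) (FSlt : forall j, FreeAlgebras (Siglt j)).

Definition Sj (j : J) (W : C) : C :=
  bcoprod Q (fa_obj (FSlt j) W) (fob (Sig j) (fa_obj (FSlt j) W)).
Definition Sj_map (j : J) {W W' : C} (g : hom W W') : hom (Sj j W) (Sj j W') :=
  summap Q (fstar (FSlt j) g) (fmap (Sig j) (fstar (FSlt j) g)).

Definition RhojType : Type :=
  forall j X Y, hom (fob (Sig j) (bprod P X (bob B X Y))) (bob B X (Sj j (bcoprod Q X Y))).

(* dinatural in X, natural in Y *)
Definition IsRelFlatLaw (rhoj : RhojType) : Prop :=
  (forall j (X X' Y : C) (f : hom X X'),
     bmap B (idm X) (Sj_map j (summap Q f (idm Y))) ∘ rhoj j X Y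
       ∘ fmap (Sig j) (prodmap P (idm X) (bmap B f (idm Y)))
     = bmap B f (idm (Sj j (bcoprod Q X' Y))) ∘ rhoj j X' Y
       ∘ fmap (Sig j) (prodmap P f (idm (bob B X' Y)))) /\
  (forall j (X Y Y' : C) (g : hom Y Y'),
     bmap B (idm X) (Sj_map j (summap Q (idm X) g)) ∘ rhoj j X Y
     = rhoj j X Y' ∘ fmap (Sig j) (prodmap P (idm X) (bmap B (idm X) g))).

Variable injlt : forall j X, hom (fob (Siglt j) X) (fob Sigma X).
Variable inj : forall j X, hom (fob (Sig j) X) (fob Sigma X).

Definition injstar (j : J) (W : C) : hom (fa_obj (FSlt j) W) (fa_obj FS W) :=
  fa_ext (FSlt j) (fa_str FS W ∘ injlt j (fa_obj FS W)) (fa_eta FS W).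

Definition e_map (j : J) (W : C) : hom (Sj j W) (fa_obj FS W) :=
  copair Q (injstar j W) (fa_str FS W ∘ inj j (fa_obj FS W) ∘ fmap (Sig j) (injstar j W)).

Definition IsInducedLaw (rhoj : RhojType)
  (rho : forall X Y, hom (fob Sigma (bprod P X (bob B X Y))) (bob B X (fa_obj FS (bcoprod Q X Y))))
  : Prop :=
  forall j X Y, rho X Y ∘ inj j (bprod P X (bob B X Y))
                = bmap B (idm X) (e_map j (bcoprod Q X Y)) ∘ rhoj j X Y.

Definition IsOperationalModel (IA : InitialAlgebra Sigma)
  (rho : forall X Y, hom (fob Sigma (bprod P X (bob B X Y))) (bob B X (fa_obj FS (bcoprod Q X Y))))
  (gamma : hom (ia_obj IA) (bob B (ia_obj IA) (ia_obj IA))) : Prop :=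
  gamma ∘ ia_str IA
  = bmap B (idm (ia_obj IA)) (hat FS (ia_str IA) ∘ fstar FS (codiag Q (ia_obj IA)))
      ∘ rho (ia_obj IA) (ia_obj IA)
      ∘ fmap Sigma (pairing P (idm (ia_obj IA)) gamma).

(* The coalgebra Z + Sigma_j Z -> B(Z, Z + Sigma_j Z) used to define a^j_rho,
   given a^{<j}_rho = alt : Sigma_{<j} Z -> Z. *)
Definition aj_coalg (rhoj : RhojType) {Z : C} (z : hom Z (bob B Z Z)) (j : J)
  (alt : hom (fob (Siglt j) Z) Z)
  : hom (bcoprod Q Z (fob (Sig j) Z)) (bob B Z (bcoprod Q Z (fob (Sig j) Z))) :=
  codiag Q _
  ∘ summap Q (bmap B (idm Z) (cinl Q)) (idm _)
  ∘ summap Q (idm _) (bmap B (idm Z) (summap Q (hat (FSlt j) alt) (fmap (Sig j) (hat (FSlt j) alt))))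
  ∘ summap Q (idm _) (bmap B (idm Z) (Sj_map j (codiag Q Z)) ∘ rhoj j Z Z)
  ∘ summap Q z (fmap (Sig j) (pairing P (idm Z) z)).

End RelFlat.

(* Main.v *)
Require Import Defs.
From Stdlib Require Import Relations Wellfounded.

Lemma postc {c : Category} {A B D : c} (f g : hom B D) (k : hom A B) : f = g -> f ∘ k = g ∘ k.
Proof. intros ->; reflexivity. Qed.
Lemma prec {c : Category} {A B D : c} (f g : hom A B) (k : hom B D) : f = g -> k ∘ f = k ∘ g.
Proof. intros ->; reflexivity. Qed.
Ltac rnorm := repeat rewrite <- comp_assoc; repeat rewrite comp_idl; repeat rewrite comp_idr.
Ltac rnormH H := repeat rewrite <- comp_assoc in H.
Ltac inst H' := repeat (match type of H' with forall _ : _, _ => let H3 := fresh in epose proof (H' _) as H3; clear H'; rename H3 into H' end).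
Ltac rw_tac H := rnorm;
  let H' := fresh in pose proof H as H'; inst H'; rnormH H';
  first [ rewrite H'; clear H'
        | let H2 := fresh in epose proof (postc _ _ _ H') as H2; rnormH H2; rewrite H2; clear H2 H' ];
  rnorm.
Tactic Notation "rw" open_constr(H) := rw_tac H.
Ltac rwb_tac H := rnorm;
  let H' := fresh in pose proof H as H'; inst H'; rnormH H'; symmetry in H';
  first [ rewrite H'; clear H'
        | let H2 := fresh in epose proof (postc _ _ _ H') as H2; rnormH H2; rewrite H2; clear H2 H' ];
  rnorm.
Tactic Notation "rwb" open_constr(H) := rwb_tac H.

Lemma copair_ext {C : Category} (Q : BinCoproducts C) {A B X : C} (h h' : hom (bcoprod Q A B) X) :
  h ∘ cinl Q = h' ∘ cinl Q -> h ∘ cinr Q = h' ∘ cinr Q -> h = h'.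
Proof. intros H1 H2. rewrite (copair_unique _ Q _ _ _ _ _ h eq_refl eq_refl).
  rewrite (copair_unique _ Q _ _ _ _ _ h' (eq_sym H1) (eq_sym H2)). reflexivity. Qed.
Lemma summap_inl {C : Category} (Q : BinCoproducts C) {A A' B B' : C} (f : hom A A') (g : hom B B') :
  summap Q f g ∘ cinl Q = cinl Q ∘ f.
Proof. unfold summap. apply copair_inl. Qed.
Lemma summap_inr {C : Category} (Q : BinCoproducts C) {A A' B B' : C} (f : hom A A') (g : hom B B') :
  summap Q f g ∘ cinr Q = cinr Q ∘ g.
Proof. unfold summap. apply copair_inr. Qed.
Lemma codiag_inl {C : Category} (Q : BinCoproducts C) (A : C) : codiag Q A ∘ cinl Q = idm A.
Proof. apply copair_inl. Qed.
Lemma codiag_inr {C : Category} (Q : BinCoproducts C) (A : C) : codiag Q A ∘ cinr Q = idm A.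
Proof. apply copair_inr. Qed.
Lemma copair_inl' {C : Category} (Q : BinCoproducts C) {A B X : C} (f : hom A X) (g : hom B X) :
  copair Q f g ∘ cinl Q = f.
Proof. apply copair_inl. Qed.
Lemma copair_inr' {C : Category} (Q : BinCoproducts C) {A B X : C} (f : hom A X) (g : hom B X) :
  copair Q f g ∘ cinr Q = g.
Proof. apply copair_inr. Qed.

Lemma pairing_ext {C : Category} (P : BinProducts C) {X A B : C} (h h' : hom X (bprod P A B)) :
  pi1 P ∘ h = pi1 P ∘ h' -> pi2 P ∘ h = pi2 P ∘ h' -> h = h'.
Proof. intros H1 H2. rewrite (pairing_unique _ P _ _ _ _ _ h eq_refl eq_refl).
  rewrite (pairing_unique _ P _ _ _ _ _ h' (eq_sym H1) (eq_sym H2)). reflexivity. Qed.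
Lemma pi1_pairing {C : Category} (P : BinProducts C) {X A B : C} (f : hom X A) (g : hom X B) :
  pi1 P ∘ pairing P f g = f.
Proof. apply pairing_pi1. Qed.
Lemma pi2_pairing {C : Category} (P : BinProducts C) {X A B : C} (f : hom X A) (g : hom X B) :
  pi2 P ∘ pairing P f g = g.
Proof. apply pairing_pi2. Qed.
Lemma pairing_comp {C : Category} (P : BinProducts C) {Y X A B : C} (f : hom X A) (g : hom X B) (k : hom Y X) :
  pairing P f g ∘ k = pairing P (f ∘ k) (g ∘ k).
Proof. apply pairing_ext; repeat rw pi1_pairing; repeat rw pi2_pairing; reflexivity. Qed.
Lemma prodmap_pairing {C : Category} (P : BinProducts C) {X A A' B B' : C}
  (f : hom A A') (g : hom B B') (u : hom X A) (v : hom X B) :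
  prodmap P f g ∘ pairing P u v = pairing P (f ∘ u) (g ∘ v).
Proof. unfold prodmap. rewrite pairing_comp. rnorm. rw pi1_pairing. rw pi2_pairing. reflexivity. Qed.

Lemma bmap_idc {C : Category} (B : Bifunctor C) {X Y Y' Y'' : C} (g : hom Y Y') (g' : hom Y' Y'') :
  bmap B (idm X) (g' ∘ g) = bmap B (idm X) g' ∘ bmap B (idm X) g.
Proof. rewrite <- bmap_comp, comp_idl. reflexivity. Qed.
Lemma bmap_cid {C : Category} (B : Bifunctor C) {X X' X'' Y : C} (f : hom X' X) (f' : hom X'' X') :
  bmap B (f ∘ f') (idm Y) = bmap B f' (idm Y) ∘ bmap B f (idm Y).
Proof. rewrite <- bmap_comp, comp_idl. reflexivity. Qed.
Lemma bmap_comm {C : Category} (B : Bifunctor C) {X X' Y Y' : C} (f : hom X' X) (g : hom Y Y') :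
  bmap B f (idm Y') ∘ bmap B (idm X) g = bmap B (idm X') g ∘ bmap B f (idm Y).
Proof. rewrite <- !bmap_comp, !comp_idl, !comp_idr. reflexivity. Qed.
Lemma bmap_ii {C : Category} (B : Bifunctor C) (X Y : C) : bmap B (idm X) (idm Y) = idm _.
Proof. apply bmap_id. Qed.

Lemma fmap_c {C : Category} (F : Functor C) {A B D : C} (g : hom B D) (f : hom A B) :
  fmap F (g ∘ f) = fmap F g ∘ fmap F f.
Proof. apply fmap_comp. Qed.
Lemma fmap_i {C : Category} (F : Functor C) (A : C) : fmap F (idm A) = idm _.
Proof. apply fmap_id. Qed.

Lemma free_uniq {C : Category} {F : Functor C} (FA : FreeAlgebras F) {X A : C}
  (a : hom (fob F A) A) (h1 h2 : hom (fa_obj FA X) A) :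
  IsAlgMor F (fa_str FA X) a h1 -> IsAlgMor F (fa_str FA X) a h2 ->
  h1 ∘ fa_eta FA X = h2 ∘ fa_eta FA X -> h1 = h2.
Proof. intros H1 H2 E.
  rewrite (fa_ext_unique _ FA X A a _ h1 H1 eq_refl).
  rewrite (fa_ext_unique _ FA X A a _ h2 H2 (eq_sym E)). reflexivity. Qed.
Lemma ext_str {C : Category} {F : Functor C} (FA : FreeAlgebras F) {X A : C}
  (a : hom (fob F A) A) (f : hom X A) :
  fa_ext FA a f ∘ fa_str FA X = a ∘ fmap F (fa_ext FA a f).
Proof. apply fa_ext_mor. Qed.
Lemma ext_eta {C : Category} {F : Functor C} (FA : FreeAlgebras F) {X A : C}
  (a : hom (fob F A) A) (f : hom X A) :
  fa_ext FA a f ∘ fa_eta FA X = f.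
Proof. apply fa_ext_eta. Qed.

Lemma coprod_ext {C : Category} {I : Type} {F : I -> C} {S : C} {inj : forall i, hom (F i) S}
  (H : IsCoproduct F S inj) {X : C} (h h' : hom S X) :
  (forall i, h ∘ inj i = h' ∘ inj i) -> h = h'.
Proof. intros E. destruct (H X (fun i => h' ∘ inj i)) as [k [_ U]].
  rewrite (U h E), (U h' (fun i => eq_refl)). reflexivity. Qed.

Lemma hat_str {C : Category} {F : Functor C} (FA : FreeAlgebras F) {A : C} (a : hom (fob F A) A) :
  hat FA a ∘ fa_str FA A = a ∘ fmap F (hat FA a).
Proof. apply fa_ext_mor. Qed.
Lemma hat_eta {C : Category} {F : Functor C} (FA : FreeAlgebras F) {A : C} (a : hom (fob F A) A) :
  hat FA a ∘ fa_eta FA A = idm A.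
Proof. apply fa_ext_eta. Qed.
Lemma fstar_str {C : Category} {F : Functor C} (FA : FreeAlgebras F) {X Y : C} (f : hom X Y) :
  fstar FA f ∘ fa_str FA X = fa_str FA Y ∘ fmap F (fstar FA f).
Proof. apply fa_ext_mor. Qed.
Lemma fstar_eta {C : Category} {F : Functor C} (FA : FreeAlgebras F) {X Y : C} (f : hom X Y) :
  fstar FA f ∘ fa_eta FA X = fa_eta FA Y ∘ f.
Proof. apply fa_ext_eta. Qed.
Lemma fstar_comp {C : Category} {F : Functor C} (FA : FreeAlgebras F) {X Y W : C} (g : hom Y W) (f : hom X Y) :
  fstar FA (g ∘ f) = fstar FA g ∘ fstar FA f.
Proof. apply (free_uniq FA (fa_str FA W)); unfold IsAlgMor.
  - apply fstar_str.
  - rw fstar_str. rw fstar_str. rewrite fmap_c. rnorm. reflexivity.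
  - rw fstar_eta. rw fstar_eta. rw fstar_eta. reflexivity. Qed.
Lemma hat_nat {C : Category} {F : Functor C} (FA : FreeAlgebras F) {A A' : C}
  (a : hom (fob F A) A) (a' : hom (fob F A') A') (h : hom A A') :
  IsAlgMor F a a' h -> h ∘ hat FA a = hat FA a' ∘ fstar FA h.
Proof. unfold IsAlgMor; intro Hh. apply (free_uniq FA a'); unfold IsAlgMor.
  - rw hat_str. rw Hh. rewrite fmap_c. rnorm. reflexivity.
  - rw fstar_str. rw hat_str. rewrite fmap_c. rnorm. reflexivity.
  - rw hat_eta. rw fstar_eta. rw hat_eta. reflexivity. Qed.

Theorem corollary3p12
  (C : Category) (P : BinProducts C) (Q : BinCoproducts C) (B : Bifunctor C)
  (* (J,<) well-founded *)
  (J : Type) (lt : J -> J -> Prop) (Hwf : well_founded lt)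
  (* Sigma = coprod_j Sigma_j *)
  (Sig : J -> Functor C) (Sigma : Functor C)
  (inj : forall j X, hom (fob (Sig j) X) (fob Sigma X))
  (Hcop : IsFunctorCoproduct Sig Sigma inj)
  (* Sigma_{<j} = coprod_{i<j} Sigma_i, and inj_{<j} : Sigma_{<j} -> Sigma induced *)
  (Siglt : J -> Functor C)
  (inclt : forall j (p : {i : J | lt i j}) X, hom (fob (Sig (proj1_sig p)) X) (fob (Siglt j) X))
  (Hcoplt : forall j, IsFunctorCoproduct (fun p : {i : J | lt i j} => Sig (proj1_sig p)) (Siglt j) (inclt j))
  (injlt : forall j X, hom (fob (Siglt j) X) (fob Sigma X))
  (Hinjlt : forall j (p : {i : J | lt i j}) X, injlt j X ∘ inclt j p X = inj (proj1_sig p) X)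
  (* free algebras, initial algebra, final coalgebras *)
  (FS : FreeAlgebras Sigma) (FSj : forall j, FreeAlgebras (Sig j))
  (FSlt : forall j, FreeAlgebras (Siglt j))
  (IA : InitialAlgebra Sigma)
  (NU : forall X : C, FinalCoalgebra B X)
  (* the relatively flat law and the induced law rho *)
  (rhoj : RhojType P Q B Sig Siglt FSlt) (Hrhoj : IsRelFlatLaw P Q B Sig Siglt FSlt rhoj)
  (rho : forall X Y, hom (fob Sigma (bprod P X (bob B X Y))) (bob B X (fa_obj FS (bcoprod Q X Y))))
  (Hrho : IsInducedLaw P Q B Sig Sigma Siglt FS FSlt injlt inj rhoj rho)
  (* its operational model *)
  (gamma : hom (ia_obj IA) (bob B (ia_obj IA) (ia_obj IA)))
  (Hgamma : IsOperationalModel P Q B Sigma FS IA rho gamma)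
  (* a locally final coalgebra *)
  (Z : C) (z : hom Z (bob B Z Z)) (Hz : IsLocallyFinal B z)
  (* the construction of a_rho: a^j_rho, a^{<j}_rho and a_rho *)
  (aj : forall j, hom (bcoprod Q Z (fob (Sig j) Z)) Z)
  (alt : forall j, hom (fob (Siglt j) Z) Z)
  (arho : hom (fob Sigma Z) Z)
  (Halt : forall j (p : {i : J | lt i j}), alt j ∘ inclt j p Z = aj (proj1_sig p) ∘ cinr Q)
  (Haj : forall j, IsCoalgMor B Z (aj_coalg P Q B Sig Siglt FSlt rhoj z j (alt j)) z (aj j))
  (Harho : forall j, arho ∘ inj j Z = aj j ∘ cinr Q) :
  (* adequacy: k . [[-]] = beh *)
  exists k : hom Z (fc_obj (NU (ia_obj IA))),
    k ∘ ia_fold IA arho = fc_unfold (NU (ia_obj IA)) gamma.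
Proof.
  destruct Hcop as [HcopN HcopC]. unfold IsNatural in HcopN.
  assert (HcopltN : forall j p X Y (f : hom X Y), fmap (Siglt j) f ∘ inclt j p X = inclt j p Y ∘ fmap (Sig (proj1_sig p)) f).
  { intros j p. exact (proj1 (Hcoplt j) p). }
  assert (Hinjlt_nat : forall j X Y (f : hom X Y),
    fmap Sigma f ∘ injlt j X = injlt j Y ∘ fmap (Siglt j) f).
  { intros j X Y f. apply (coprod_ext (proj2 (Hcoplt j) X)). intro p. rnorm.
    rw (Hinjlt j p X). rw (HcopN (proj1_sig p) X Y f).
    rw (HcopltN j p X Y f). rw (Hinjlt j p Y). reflexivity. }
  assert (injstar_str : forall j W, injstar Sigma Siglt FS FSlt injlt j W ∘ fa_str (FSlt j) W
     = fa_str FS W ∘ injlt j (fa_obj FS W) ∘ fmap (Siglt j) (injstar Sigma Siglt FS FSlt injlt j W)).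
  { intros. unfold injstar. apply ext_str. }
  assert (injstar_eta : forall j W, injstar Sigma Siglt FS FSlt injlt j W ∘ fa_eta (FSlt j) W = fa_eta FS W).
  { intros. unfold injstar. apply ext_eta. }
  assert (Hstar : forall j W W' (f : hom W W'),
    fstar FS f ∘ injstar Sigma Siglt FS FSlt injlt j W
    = injstar Sigma Siglt FS FSlt injlt j W' ∘ fstar (FSlt j) f).
  { intros j W W' f. apply (free_uniq (FSlt j) (fa_str FS W' ∘ injlt j (fa_obj FS W'))); unfold IsAlgMor.
    - rw injstar_str. rw (fstar_str FS). rw Hinjlt_nat. rewrite fmap_c. rnorm. reflexivity.
    - rw (fstar_str (FSlt j)). rw injstar_str. rewrite fmap_c. rnorm. reflexivity.
    - rw injstar_eta. rw (fstar_eta FS). rw (fstar_eta (FSlt j)). rw injstar_eta. reflexivity. }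
  assert (Hen : forall j W W' (f : hom W W'),
    fstar FS f ∘ e_map Q Sig Sigma Siglt FS FSlt injlt inj j W
    = e_map Q Sig Sigma Siglt FS FSlt injlt inj j W' ∘ Sj_map Q Sig Siglt FSlt j f).
  { intros j W W' f. apply copair_ext; unfold e_map, Sj_map, Sj; rnorm.
    - rw copair_inl'. rw summap_inl. rw copair_inl'. apply Hstar.
    - rw copair_inr'. rw summap_inr. rw copair_inr'. rw (fstar_str FS).
      rw (HcopN j). rewrite <- !fmap_c. rewrite Hstar. reflexivity. }
  unfold IsInducedLaw in Hrho. destruct Hrhoj as [HrjX HrjY].
  assert (HrY : forall X Y Y' (g : hom Y Y'),
    bmap B (idm X) (fstar FS (summap Q (idm X) g)) ∘ rho X Y
    = rho X Y' ∘ fmap Sigma (prodmap P (idm X) (bmap B (idm X) g))).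
  { intros X Y Y' g. apply (coprod_ext (HcopC _)). intro j. rnorm.
    rw (Hrho j X Y). rwb bmap_idc. rewrite Hen. rw bmap_idc. rw (HrjY j X Y Y' g).
    rw (HcopN j). rw (Hrho j X Y'). reflexivity. }
  assert (HrX : forall X X' Y (f : hom X X'),
    bmap B (idm X) (fstar FS (summap Q f (idm Y))) ∘ rho X Y
      ∘ fmap Sigma (prodmap P (idm X) (bmap B f (idm Y)))
    = bmap B f (idm _) ∘ rho X' Y ∘ fmap Sigma (prodmap P f (idm _))).
  { intros X X' Y f. apply (coprod_ext (HcopC _)). intro j. rnorm.
    rw (HcopN j). rw (Hrho j X Y). rwb bmap_idc. rewrite Hen. rw bmap_idc.
    rw (HrjX j X X' Y f). rw (HcopN j). rw (Hrho j X' Y). rw bmap_comm. reflexivity. }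
  assert (coalg_inl : forall j, aj_coalg P Q B Sig Siglt FSlt rhoj z j (alt j) ∘ cinr Q
     = bmap B (idm Z) (summap Q (hat (FSlt j) (alt j)) (fmap (Sig j) (hat (FSlt j) (alt j))))
       ∘ bmap B (idm Z) (Sj_map Q Sig Siglt FSlt j (codiag Q Z)) ∘ rhoj j Z Z
       ∘ fmap (Sig j) (pairing P (idm Z) z)).
  { intro j. unfold aj_coalg. rnorm. repeat rw summap_inr. rw codiag_inr. reflexivity. }
  assert (coalg_inl' : forall j, aj_coalg P Q B Sig Siglt FSlt rhoj z j (alt j) ∘ cinl Q
     = bmap B (idm Z) (cinl Q) ∘ z).
  { intro j. unfold aj_coalg. rnorm. repeat rw summap_inl. rw codiag_inl. reflexivity. }
  assert (aj_inl : forall j, aj j ∘ cinl Q = idm Z).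
  { intro j. destruct (Hz Z z) as [u [_ U]]. rewrite (U (aj j ∘ cinl Q)), (U (idm Z)). reflexivity.
    - unfold IsCoalgMor. rewrite bmap_ii. rnorm. reflexivity.
    - unfold IsCoalgMor. pose proof (Haj j) as Hj. unfold IsCoalgMor in Hj.
      rw Hj. rw coalg_inl'. rwb bmap_idc. reflexivity. }
  assert (alt_eq : forall j, arho ∘ injlt j Z = alt j).
  { intro j. apply (coprod_ext (proj2 (Hcoplt j) Z)). intro p. rnorm.
    rw (Hinjlt j p Z). rw Harho. rw Halt. reflexivity. }
  assert (hat_star : forall j, hat FS arho ∘ injstar Sigma Siglt FS FSlt injlt j Z = hat (FSlt j) (alt j)).
  { intro j. apply (free_uniq (FSlt j) (alt j)); unfold IsAlgMor.
    - rw injstar_str. rw hat_str. rw Hinjlt_nat. rw alt_eq. rewrite fmap_c. rnorm. reflexivity.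
    - apply hat_str.
    - rw injstar_eta. rw hat_eta. rw hat_eta. reflexivity. }
  assert (key : forall j, aj j ∘ summap Q (hat (FSlt j) (alt j)) (fmap (Sig j) (hat (FSlt j) (alt j)))
     = hat FS arho ∘ e_map Q Sig Sigma Siglt FS FSlt injlt inj j Z).
  { intro j. apply copair_ext; unfold e_map, Sj; rnorm.
    - rw summap_inl. rw aj_inl. rw copair_inl'. rewrite hat_star. reflexivity.
    - rw summap_inr. rw copair_inr'. rw hat_str. rw HcopN. rw Harho.
      rewrite <- fmap_c. rewrite hat_star. reflexivity. }
  assert (Hbi : z ∘ arho = bmap B (idm Z) (hat FS arho ∘ fstar FS (codiag Q Z)) ∘ rho Z Z
                 ∘ fmap Sigma (pairing P (idm Z) z)).
  { apply (coprod_ext (HcopC _)). intro j. rnorm.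
    rw Harho. pose proof (Haj j) as Hj. unfold IsCoalgMor in Hj. rw Hj. rw coalg_inl.
    rw HcopN. rw Hrho. repeat rwb bmap_idc. rw key. rw Hen. reflexivity. }
  unfold IsOperationalModel in Hgamma.
  set (M := ia_obj IA) in *.
  set (h := ia_fold IA arho).
  assert (Hh : h ∘ ia_str IA = arho ∘ fmap Sigma h) by apply ia_fold_mor.
  set (d := pairing P (ia_str IA ∘ fmap Sigma (pi1 P))
              (bmap B (idm M) (hat FS arho ∘ fstar FS (copair Q h (idm Z))) ∘ rho M Z)).
  assert (Hu : forall f : hom M (bob B M Z),
    f ∘ ia_str IA = bmap B (idm M) (hat FS arho ∘ fstar FS (copair Q h (idm Z))) ∘ rho M Z
                    ∘ fmap Sigma (pairing P (idm M) f) ->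
    pairing P (idm M) f = ia_fold IA d).
  { intros f Hf. apply ia_fold_unique. unfold IsAlgMor, d. apply pairing_ext; rnorm.
    - repeat rw pi1_pairing. rwb fmap_c. repeat rw pi1_pairing. rewrite fmap_i. rnorm. reflexivity.
    - repeat rw pi2_pairing. rnormH Hf. exact Hf. }
  assert (Hh' : IsAlgMor Sigma (ia_str IA) arho h) by exact Hh.
  assert (Hf1 : bmap B (idm M) h ∘ gamma ∘ ia_str IA
     = bmap B (idm M) (hat FS arho ∘ fstar FS (copair Q h (idm Z))) ∘ rho M Z
       ∘ fmap Sigma (pairing P (idm M) (bmap B (idm M) h ∘ gamma))).
  { assert (E1 : pairing P (idm M) (bmap B (idm M) h ∘ gamma)
       = prodmap P (idm M) (bmap B (idm M) h) ∘ pairing P (idm M) gamma)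
      by (rewrite prodmap_pairing, comp_idl; reflexivity).
    assert (Ecop : h ∘ codiag Q M = copair Q h (idm Z) ∘ summap Q (idm M) h).
    { apply copair_ext; rnorm.
      - rw codiag_inl. rw summap_inl. rw copair_inl'. reflexivity.
      - rw codiag_inr. rw summap_inr. rw copair_inr'. reflexivity. }
    rewrite E1, fmap_c. rwb HrY. change (ia_obj IA) with M. rw Hgamma. repeat rwb bmap_idc.
    rw (hat_nat FS _ _ h Hh'). repeat rwb fstar_comp. rewrite Ecop. reflexivity. }
  assert (Hf2 : bmap B h (idm Z) ∘ z ∘ h ∘ ia_str IA
     = bmap B (idm M) (hat FS arho ∘ fstar FS (copair Q h (idm Z))) ∘ rho M Z
       ∘ fmap Sigma (pairing P (idm M) (bmap B h (idm Z) ∘ z ∘ h))).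
  { assert (E2 : pairing P (idm M) (bmap B h (idm Z) ∘ z ∘ h)
       = prodmap P (idm M) (bmap B h (idm Z)) ∘ pairing P (idm M) (z ∘ h))
      by (rewrite prodmap_pairing, comp_idl, comp_assoc; reflexivity).
    assert (Ecop2 : copair Q h (idm Z) = codiag Q Z ∘ summap Q h (idm Z)).
    { apply copair_ext; rnorm.
      - rw summap_inl. rw codiag_inl. rw copair_inl'. reflexivity.
      - rw summap_inr. rw codiag_inr. rw copair_inr'. reflexivity. }
    rewrite E2, fmap_c, Ecop2, fstar_comp. repeat rw bmap_idc.
    rw (HrX M Z Z h). rw Hh. rw Hbi. repeat rw bmap_idc. repeat rw bmap_comm.
    repeat rwb fmap_c. rewrite prodmap_pairing, pairing_comp. rnorm. reflexivity. }
  assert (Hbm : bmap B (idm M) h ∘ gamma = bmap B h (idm Z) ∘ z ∘ h).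
  { assert (E := eq_trans (Hu _ Hf1) (eq_sym (Hu _ Hf2))).
    apply (f_equal (fun t => pi2 P ∘ t)) in E. rewrite !pi2_pairing in E. exact E. }
  exists (fc_unfold (NU M) (bmap B h (idm Z) ∘ z)).
  apply fc_unfold_unique. unfold IsCoalgMor.
  pose proof (fc_unfold_mor _ _ (NU M) Z (bmap B h (idm Z) ∘ z)) as Hk. unfold IsCoalgMor in Hk.
  rw Hk. unfold M in *. rwb Hbm. rewrite bmap_idc. rnorm. reflexivity.
Qed.
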